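(* Let $q$ be a power of an odd prime, let $n$ be an even positive integer, and let $k$ be a divisor of $q-1$. Then $(q^n,k)$ does not give a $3$-design.
   Context: For a prime power $Q\equiv1\pmod 4$ (note $q^n\equiv 1\pmod 4$ here) the group $\mathrm{PSL}(2,Q)$ acts on $\mathrm{PG}(1,Q)=\mathbb{F}_Q\cup\{\infty\}$ by linear fractional transformations $z\mapsto (az+b)/(cz+d)$ with $ad-bc$ a nonzero square in $\mathbb{F}_Q$. For a divisor $k$ of $Q-1$, ''$(Q,k)$ gives a $3$-design'' means that the $\mathrm{PSL}(2,Q)$-orbit of the unique subgroup of order $k$ of $\mathbb{F}_Q^\times$ is the block set of a $3$-$(Q+1,k,\lambda)$ design for some positive integer $\lambda$. *)

(* Defs.v *)
From mathcomp Require Import all_boot all_order all_algebra all_field.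
Set Implicit Arguments. Unset Strict Implicit. Unset Printing Implicit Defensive.
Import GRing.Theory.
Local Open Scope ring_scope.

(* The projective line PG(1,F) = F ∪ {∞}; None stands for ∞. *)
Definition pline (F : finFieldType) := option F.

Definition lft (F : finFieldType) (g : F * F * F * F) (z : option F) : option F :=
  let: (a, b, c, d) := g in
  match z with
  | None => if c == 0 then None else Some (a / c)
  | Some x => if c * x + d == 0 then None else Some ((a * x + b) / (c * x + d))
  end.

(* (a,b,c,d) represents an element of PSL(2,F): ad - bc is a nonzero square. *)
Definition is_psl (F : finFieldType) (g : F * F * F * F) : bool :=
  let: (a, b, c, d) := g in
  (a * d - b * c != 0) && [exists y : F, y ^+ 2 == a * d - b * c].

(* The unique subgroup of order k of F^× (k | #|F| - 1): the k-th roots of unity. *)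
Definition mu_sub (F : finFieldType) (k : nat) : {set F} :=
  [set x : F | (x != 0) && (x ^+ k == 1)].

Definition psl_orbit (F : finFieldType) (k : nat) : {set {set option F}} :=
  [set [set lft g z | z in [set Some x | x in mu_sub F k]]
     | g in [set g : F * F * F * F | is_psl g]].

Definition gives_3design (F : finFieldType) (k : nat) : Prop :=
  exists lambda : nat, (0 < lambda)%N /\
    forall T : {set option F}, #|T| = 3%N ->
      #|[set X in psl_orbit F k | T \subset X]| = lambda.

(* Main.v *)
Require Import Defs.
From mathcomp Require Import all_boot all_order all_algebra all_field.
From mathcomp Require Import cyclic ring lra zify.
From mathcomp Require Import cyclic.
Import GRing.Theory.
Local Open Scope ring_scope.

Lemma frobB (F : finFieldType) p e (x y : F) : p \in [pchar F] ->
  (x - y) ^+ (p ^ e) = x ^+ (p ^ e) - y ^+ (p ^ e).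
Proof.
move=> chF; elim: e x y => [|e IH] x y; first by rewrite !expr1.
rewrite expnS !exprM -!(pFrobenius_autE chF) pFrobenius_autB_comm.
  by rewrite IH.
exact: mulrC.
Qed.

Lemma nonsq (F : finFieldType) : (2%:R : F) != 0 -> exists nu : F, forall y, y ^+ 2 != nu.
Proof.
move=> two.
have ninj : ~~ (#|[set y ^+ 2 | y in [set: F]]| == #|[set: F]|).
  apply/imset_injP => inj.
  have := inj 1 (-1) (in_setT _) (in_setT _).
  rewrite sqrrN => /(_ erefl) /eqP; rewrite -subr_eq0 opprK.
  by rewrite (negPf two).
case: (pickP [pred nu | nu \notin [set y ^+ 2 | y in [set: F]]]) => [nu Hnu | H].
  exists nu => y; apply/eqP => e; move: Hnu; rewrite /= -e.
  by move/negP; apply; apply/imsetP; exists y; rewrite ?in_setT.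
have : [set y ^+ 2 | y in [set: F]] = [set: F].
  apply/setP => x; rewrite in_setT; move: (H x) => /= /negbFE //.
by move=> E; rewrite E eqxx in ninj.
Qed.

Lemma parity (q n : nat) : odd q -> ~~ odd n -> exists s, (q ^ n).-1 = (q.-1 * (2 * s))%N.
Proof.
move=> oq en.
have hn : n = (2 * n./2)%N by rewrite -{1}(odd_double_half n) (negPf en) add0n mul2n.
rewrite hn expnM predn_exp.
have h2 := predn_exp q 2.
rewrite big_ord_recr big_ord_recr big_ord0 /= in h2.
rewrite h2.
exists ((q./2).+1 * \sum_(i < n./2) (q ^ 2) ^ i)%N.
have hq : (1 + q ^ 1 = 2 * (q./2).+1)%N.
  by rewrite expn1 -{1}(odd_double_half q) oq mul2n doubleS; lia.
rewrite add0n expn0 hq; lia.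
Qed.
Lemma prim_root_F (F : finFieldType) :
  exists w : F, (#|F|.-1).-primitive_root w.
Proof.
have gt1 : (1 < #|F|)%N by apply: finNzRing_gt1.
pose rs := [seq x <- enum F | x != 0].
have H : has (#|F|.-1).-primitive_root rs.
  apply: has_prim_root.
  - by rewrite -ltnS prednK // ltnW.
  - apply/allP => x; rewrite mem_filter => /andP[nz _].
    rewrite unity_rootE; apply/eqP.
    apply: (mulfI nz); rewrite mulr1 -exprS prednK ?expf_card //; exact: ltnW.
  - by rewrite filter_uniq // enum_uniq.
  - rewrite size_filter -(cardC1 (0:F)) cardE /enum_mem size_filter. apply: eq_leq; rewrite (@eq_filter _ _ predT) // filter_predT; exact: eq_count.
by case/hasP: H => w _ Hw; exists w.
Qed.
Lemma sq_fixed (F : finFieldType) (q s : nat) (z : F) :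
  #|F|.-1 = (q.-1 * (2 * s))%N -> z ^+ q = z -> exists y, y ^+ 2 = z.
Proof.
move=> hN hz.
have [->|nz] := eqVneq z 0; first by exists 0; rewrite expr0n.
have gt1 : (1 < #|F|)%N by apply: finNzRing_gt1.
have q0 : (0 < q.-1)%N.
  by case: (q.-1) hN => //= ; rewrite mul0n => /eqP; rewrite -subn1 subn_eq0 leqNgt gt1.
have zN : z ^+ #|F|.-1 = 1.
  apply: (mulfI nz); rewrite mulr1 -exprS prednK ?expf_card //; exact: ltnW.
have zq : z ^+ q.-1 = 1.
  apply: (mulfI nz); rewrite mulr1 -exprS prednK ?hz //.
  by case: q q0 {hN hz} => [|[]].
have [w pw] := prim_root_F F.
have [i hi] := prim_rootP pw zN.
move: (nat_of_ord i) hi => {}i hi.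
have : (#|F|.-1 %| i * q.-1)%N.
  by rewrite (prim_order_dvd pw) exprM -hi zq.
rewrite hN (mulnC q.-1) dvdn_pmul2r // => /(dvdn_trans (dvdn_mulr _ (dvdnn 2))).
case/dvdnP => j hj.
by exists (w ^+ j); rewrite -exprM -hj hi.
Qed.
Lemma key (F : fieldType) (a b c d u1 u2 u3 : F) :
  c * u1 + d != 0 -> c * u2 + d != 0 -> c * u3 + d != 0 ->
  ((a*u1+b)/(c*u1+d) - (a*u2+b)/(c*u2+d)) * ((a*u2+b)/(c*u2+d) - (a*u3+b)/(c*u3+d))
  * ((a*u3+b)/(c*u3+d) - (a*u1+b)/(c*u1+d)) * ((c*u1+d)*(c*u2+d)*(c*u3+d))^+2
  = (a*d-b*c)^+3 * ((u1-u2)*(u2-u3)*(u3-u1)).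
Proof. move=> h1 h2 h3. field. by rewrite h1 h2 h3. Qed.

Lemma orbit_mem (F : finFieldType) k a b c d (al : F) :
  Some al \in [set lft (a,b,c,d) z | z in [set Some x | x in mu_sub F k]] ->
  exists u, [/\ u \in mu_sub F k, c * u + d != 0 & al = (a*u+b)/(c*u+d)].
Proof.
case/imsetP => z /imsetP [u hu ->] /=.
by case: ifP => // h [->]; exists u; rewrite h.
Qed.

Lemma mu_fix (F : finFieldType) k q (u : F) : (0 < q)%N -> (k %| q.-1)%N ->
  u \in mu_sub F k -> u ^+ q = u.
Proof.
move=> q0 /dvdnP [j hj]; rewrite inE => /andP [nz /eqP uk].
by rewrite -(prednK q0) exprS hj mulnC exprM uk expr1n mulr1.
Qed.

Local Close Scope ring_scope.
Theorem proposition3p5 (q n k : nat) :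
  (exists p e : nat, [/\ prime p, odd p, (0 < e)%N & q = p ^ e]) ->
  (0 < n)%N -> ~~ odd n ->
  (k %| q - 1)%N ->
  forall F : finFieldType, #|F| = (q ^ n)%N ->
  ~ gives_3design F k.
Proof.
Local Open Scope ring_scope.

move=> [p [e [pp op e0 ->]]] n0 en kd F cF [lam [lam0 H]].
have chF : p \in [pchar F] by apply: (@card_finPcharP F p (e * n)); rewrite // expnM.
have two : (2%:R : F) != 0.
  apply/negP => h2.
  have : (2 \in [pchar F]) by apply/andP.
  by rewrite (pcharf_eq chF) => /eqP p2; rewrite -p2 in op.
have oq : odd (p ^ e) by rewrite oddX op orbT.
have q0 : (0 < p ^ e)%N by rewrite expn_gt0 prime_gt0.
have [s hs] := parity _ _ oq en.
rewrite -cF in hs.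
have sq : forall z : F, z ^+ (p ^ e) = z -> exists y, y ^+ 2 = z.
  by move=> z; apply: (sq_fixed _ _ _ _ hs).
have [nu hnu] := nonsq _ two.
have nu0 : nu != 0 by move: (hnu 0); rewrite expr0n eq_sym.
pose t := nu / 2%:R.
have t0 : t != 0 by rewrite /t mulf_neq0 // invr_eq0.
have tt : t != - t.
  apply/eqP => h; have : t + t = 0 by rewrite {1}h addNr.
  rewrite -mulr2n -mulr_natr => /eqP; rewrite mulf_eq0 (negPf t0) (negPf two) //.
pose T := Some 0 |: [set Some t; Some (-t)].
have cT : #|T| = 3%N.
  rewrite cardsU1 cards2 in_set2 /=.
  have S : forall a b : F, (Some a == Some b) = (a == b) by [].
  by rewrite !S tt eq_sym (negPf t0) eq_sym oppr_eq0 (negPf t0).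
have := H T cT => hc.
have : (0 < #|[set X in psl_orbit F k | T \subset X]|)%N by rewrite hc.
case/card_gt0P => X; rewrite inE => /andP [/imsetP [g hg ->] sub].
move: g hg sub => [[[a b] c] d]; rewrite inE /= => /andP [det0 /existsP [y /eqP hy]] sub.
have m1 := subsetP sub (Some 0) (setU11 _ _).
have m2 : Some t \in T by rewrite !inE eqxx orbT.
have m3 : Some (-t) \in T by rewrite !inE eqxx !orbT.
move: (subsetP sub _ m2) (subsetP sub _ m3) => {}m2 {}m3.
have [u1 [mu1 D1 h1]] := orbit_mem _ _ _ _ _ _ _ m1.
have [u2 [mu2 D2 h2]] := orbit_mem _ _ _ _ _ _ _ m2.
have [u3 [mu3 D3 h3]] := orbit_mem _ _ _ _ _ _ _ m3.
rewrite subn1 in kd.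
have f1 := mu_fix _ _ _ _ q0 kd mu1.
have f2 := mu_fix _ _ _ _ q0 kd mu2.
have f3 := mu_fix _ _ _ _ q0 kd mu3.
have [s12 hs12] : exists y, y ^+ 2 = u1 - u2 by apply: sq; rewrite frobB // f1 f2.
have [s23 hs23] : exists y, y ^+ 2 = u2 - u3 by apply: sq; rewrite frobB // f2 f3.
have [s31 hs31] : exists y, y ^+ 2 = u3 - u1 by apply: sq; rewrite frobB // f3 f1.
have K := key _ a b c d u1 u2 u3 D1 D2 D3.
rewrite -h1 -h2 -h3 in K.
set D := (c * u1 + d) * (c * u2 + d) * (c * u3 + d) in K.
have E : nu * (t * D) ^+ 2 = (a * d - b * c) ^+ 3 * ((u1 - u2) * (u2 - u3) * (u3 - u1)).
  rewrite -K /t; field; exact: two.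
have Dn : t * D != 0.
  by rewrite /D; apply: mulf_neq0 => //; apply: mulf_neq0 => //; apply: mulf_neq0.
have num : (y ^+ 3 * (s12 * s23 * s31)) ^+ 2 = nu * (t * D) ^+ 2.
  by rewrite E exprMn -exprM mulnC exprM hy !exprMn hs12 hs23 hs31.
move/eqP: (hnu (y ^+ 3 * (s12 * s23 * s31) / (t * D))); apply.
by rewrite expr_div_n num mulfK // expf_neq0.
Qed.
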